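(* Let $p\in(0,1]$, $c_1,c_2\ge0$, $\beta<1$, $\delta_1,\delta_2\in(0,1)$. Define $R=\frac12$, $S=(1-p)\frac12$, and for $i=1,2$: $T_i=p+(1-p)\frac12-c_i$, $Q_i=p^2\frac12\beta+p(1-p)+(1-p)^2\frac12-c_i$. (Grim Trigger) $\frac{R}{1-\delta_i}\ge T_i+\frac{\delta_iQ_i}{1-\delta_i}$ for both $i=1,2$ if and only if \[\delta_1\ge\frac{p-2c_1}{(1-\beta)p^2+p}\quad\text{and}\quad\delta_2\ge\frac{p-2c_2}{(1-\beta)p^2+p}.\] (Tit-for-Tat) $\frac{R}{1-\delta_i}\ge T_i+\delta_iS+\frac{\delta_i^2}{1-\delta_i}R$ for both $i=1,2$ if and only if \[\delta_1\ge\frac{p-2c_1}{p}\quad\text{and}\quad\delta_2\ge\frac{p-2c_2}{p}.\]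
   Context: Model: two content providers in an infinitely repeated game choose each period to cooperate or attack (ranking manipulation). Each attack succeeds with probability $p$; player $i$ pays cost $c_i$ per attack; $\beta$ is the market degradation factor when both attacks succeed; $\delta_i$ is player $i$'s discount factor. $R,T_i,S,Q_i$ are the stage payoffs for mutual cooperation, lone attack, being attacked while cooperating, and mutual attack. Cooperation is sustainable when each player weakly prefers perpetual cooperation to deviating under the trigger strategy (grim trigger: permanent mutual defection after a deviation; Tit-for-Tat: one round of retaliation then cooperation). *)

(* Defs.v *)
From Stdlib Require Import Reals Lra.
Open Scope R_scope.

Definition payR : R := 1/2.
Definition payS (p : R) : R := (1 - p) * (1/2).
Definition payT (p c : R) : R := p + (1 - p) * (1/2) - c.
Definition payQ (p beta c : R) : R :=
  p^2 * (1/2) * beta + p * (1 - p) + (1 - p)^2 * (1/2) - c.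

Definition grim_ok (p beta c delta : R) : Prop :=
  payR / (1 - delta) >= payT p c + delta * payQ p beta c / (1 - delta).

Definition tft_ok (p c delta : R) : Prop :=
  payR / (1 - delta) >= payT p c + delta * payS p + delta^2 / (1 - delta) * payR.

(* Main.v *)
Require Import Defs.
From Stdlib Require Import Reals Lra.
Open Scope R_scope.

Lemma div_nonneg_iff (x y : R) : 0 < y -> (0 <= x / y <-> 0 <= x).
Proof.
  intros hy; split; intros h.
  - replace x with ((x / y) * y) by (field; lra). apply Rmult_le_pos; lra.
  - unfold Rdiv; apply Rmult_le_pos; [lra| left; apply Rinv_0_lt_compat; lra].
Qed.

Lemma grim1 (p beta c d : R) : 0 < p -> beta < 1 -> 0 < d -> d < 1 ->
  (grim_ok p beta c d <-> d >= (p - 2 * c) / ((1 - beta) * p^2 + p)).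
Proof.
  intros hp hb hd0 hd1.
  assert (hK : 0 < (1 - beta) * p^2 + p).
  { assert (0 < (1-beta) * p^2) by (apply Rmult_lt_0_compat; [lra| simpl; nra]). lra. }
  unfold grim_ok, payR, payT, payQ.
  assert (E1 : 1/2/(1-d) - (p + (1 - p) * (1/2) - c + d * (p^2 * (1/2) * beta + p * (1 - p) + (1 - p)^2 * (1/2) - c) / (1 - d))
     = ((2*c - p + d * ((1 - beta) * p^2 + p)) / 2) / (1 - d)) by (field; lra).
  assert (E2 : d - (p - 2 * c) / ((1 - beta) * p^2 + p) = (2*c - p + d * ((1 - beta) * p^2 + p)) / ((1 - beta) * p^2 + p)) by (field; lra).
  pose proof (div_nonneg_iff ((2*c - p + d * ((1 - beta) * p^2 + p)) / 2) (1 - d) ltac:(lra)).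
  pose proof (div_nonneg_iff (2*c - p + d * ((1 - beta) * p^2 + p)) _ hK).
  split; intro h; lra.
Qed.

Lemma tft1 (p c d : R) : 0 < p -> 0 < d -> d < 1 ->
  (tft_ok p c d <-> d >= (p - 2 * c) / p).
Proof.
  intros hp hd0 hd1.
  unfold tft_ok, payR, payT, payS.
  assert (E1 : 1/2/(1-d) - (p + (1 - p) * (1/2) - c + d * ((1 - p) * (1/2)) + d^2 / (1 - d) * (1/2))
     = (2*c - p + d * p) / 2) by (field; lra).
  assert (E2 : d - (p - 2 * c) / p = (2*c - p + d * p) / p) by (field; lra).
  pose proof (div_nonneg_iff (2*c - p + d * p) _ hp).
  split; intro h; lra.
Qed.

Theorem theorem8 (p c1 c2 beta d1 d2 : R)
  (hp0 : 0 < p) (hp1 : p <= 1) (hc1 : 0 <= c1) (hc2 : 0 <= c2)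
  (hbeta : beta < 1)
  (hd1a : 0 < d1) (hd1b : d1 < 1) (hd2a : 0 < d2) (hd2b : d2 < 1) :
  ((grim_ok p beta c1 d1 /\ grim_ok p beta c2 d2) <->
     (d1 >= (p - 2 * c1) / ((1 - beta) * p^2 + p) /\
      d2 >= (p - 2 * c2) / ((1 - beta) * p^2 + p)))
  /\
  ((tft_ok p c1 d1 /\ tft_ok p c2 d2) <->
     (d1 >= (p - 2 * c1) / p /\ d2 >= (p - 2 * c2) / p)).
Proof.
  rewrite (grim1 p beta c1 d1), (grim1 p beta c2 d2), (tft1 p c1 d1), (tft1 p c2 d2) by lra.
  tauto.
Qed.
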